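(* Let $n\ge 2$, let $\mathcal{S}\subseteq(\mathbb{C}^d)^{\otimes n}$ be the permutation-symmetric subspace, and let $B=P\,J\,P^{-1}$ be a $d\times d$ complex matrix with Jordan normal form $J$, whose distinct eigenvalues are $\lambda_1,\ldots,\lambda_p$. Let $\tilde\lambda_1,\ldots,\tilde\lambda_p$ be pairwise distinct complex numbers, and let $\tilde J$ be obtained from $J$ by replacing, in every Jordan block, the eigenvalue $\lambda_i$ by $\tilde\lambda_i$ (keeping the block sizes and the superdiagonal ones), and set $\tilde B=P\tilde J P^{-1}$. Then for every $|\psi\rangle\in\mathcal{S}$: $B_{(1)}|\psi\rangle\in\mathcal{S}$ if and only if $\tilde B_{(1)}|\psi\rangle\in\mathcal{S}$.
   Context: $\mathcal{S}$ is the set of vectors in $(\mathbb{C}^d)^{\otimes n}$ invariant under all permutations of the $n$ tensor factors. For a $d\times d$ matrix $Y$, $Y_{(1)}$ denotes $Y\otimes\mathbb{I}\otimes\cdots\otimes\mathbb{I}$ on $(\mathbb{C}^d)^{\otimes n}$. One says $B$ stabilizes $|\psi\rangle\in\mathcal{S}$ if $B_{(1)}|\psi\rangle\in\mathcal{S}$; the theorem says the set of states stabilized by $B$ depends only on the Jordan block structure (which blocks share an eigenvalue), not on the eigenvalue values. *)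

(* Defs.v *)
From HB Require Import structures.
From mathcomp Require Import all_boot all_order all_algebra all_fingroup.
Set Implicit Arguments. Unset Strict Implicit. Unset Printing Implicit Defensive.
Import Order.TTheory GRing.Theory Num.Theory.
Local Open Scope ring_scope.

(* Vectors of (C^d)^{(x) n}: coefficient functions on basis multi-indices
   x : 'I_n -> 'I_d  (|x_1 ... x_n>). *)
Definition tensor (C : Type) (n d : nat) := {ffun 'I_n -> 'I_d} -> C.

Definition sym_vec (C : Type) (n d : nat) (psi : tensor C n d) : Prop :=
  forall (s : 'S_n) (x : {ffun 'I_n -> 'I_d}),
    psi [ffun i => x (s i)] = psi x.

(* Y_(1) = Y (x) I (x) ... (x) I acting on the first tensor factor (index 0):
   (Y_(1) psi)(x) = sum_k Y_{x_0, k} psi(x[0 := k]). *)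
Definition op1 (C : nzRingType) (n d : nat) (Y : 'M[C]_d) (psi : tensor C n d)
  : tensor C n d :=
  fun x => \sum_(i0 : 'I_n | nat_of_ord i0 == 0%N) \sum_(k < d)
             Y (x i0) k * psi [ffun i => if i == i0 then k else x i].

(* Jordan matrix with diagonal a and superdiagonal entries c i in {0,1}
   (c i = true iff i and i+1 lie in the same Jordan block). *)
Definition jordan_mx (C : nzRingType) (d : nat) (a : 'I_d -> C) (c : 'I_d -> bool)
  : 'M[C]_d :=
  \matrix_(i, j) ((i == j)%:R * a i + ((nat_of_ord j == (nat_of_ord i).+1) && c i)%:R).

Definition jordan_consistent (d p : nat) (e : 'I_d -> 'I_p) (c : 'I_d -> bool) : Prop :=
  forall i j : 'I_d, nat_of_ord j = (nat_of_ord i).+1 -> c i -> e i = e j.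

(* Main.v *)
Require Import Defs.
From HB Require Import structures.
From mathcomp Require Import all_boot all_order all_algebra all_fingroup.
Import Order.TTheory GRing.Theory Num.Theory.
Local Open Scope ring_scope.
Set Implicit Arguments. Unset Strict Implicit.
Section Tens.
Variables (F : fieldType) (n d : nat).
Implicit Types (x : {ffun 'I_n -> 'I_d}) (phi : tensor F n d) (A B : 'M[F]_d).

Definition upd x (j : 'I_n) (k : 'I_d) : {ffun 'I_n -> 'I_d} :=
  [ffun i => if i == j then k else x i].

Lemma upd_same x j k : upd x j k j = k.
Proof. by rewrite ffunE eqxx. Qed.
Lemma upd_other x j k l : l != j -> upd x j k l = x l.
Proof. by rewrite ffunE => /negPf ->. Qed.
Lemma upd_upd x j k k' : upd (upd x j k) j k' = upd x j k'.
Proof. by apply/ffunP => i; rewrite /upd !ffunE; case: (i == j). Qed.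
Lemma upd_comm x j l k m : j != l ->
  upd (upd x j k) l m = upd (upd x l m) j k.
Proof.
move=> hjl; apply/ffunP => i; rewrite /upd !ffunE.
case: (eqVneq i l) => [->|//]; by rewrite eq_sym (negPf hjl).
Qed.

Definition opj (j : 'I_n) A phi : tensor F n d :=
  fun x => \sum_(k < d) A (x j) k * phi (upd x j k).

Lemma opj_ext j A phi phi' x : (forall y, phi y = phi' y) ->
  opj j A phi x = opj j A phi' x.
Proof. by move=> h; apply: eq_bigr => k _; rewrite h. Qed.

Lemma opjM j A B phi x : opj j (A *m B) phi x = opj j A (opj j B phi) x.
Proof.
rewrite /opj; under eq_bigr do rewrite mxE big_distrl.
rewrite exchange_big; apply: eq_bigr => l _ /=.
rewrite upd_same big_distrr; apply: eq_bigr => k _.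
by rewrite upd_upd -mulrA.
Qed.

Lemma opjD j A B phi x : opj j (A + B) phi x = opj j A phi x + opj j B phi x.
Proof.
by rewrite /opj -big_split; apply: eq_bigr => k _; rewrite mxE mulrDl.
Qed.

Lemma opj_scalar j a phi x : opj j a%:M phi x = a * phi x.
Proof.
rewrite /opj (bigD1 (x j)) //= big1 ?addr0.
  rewrite mxE eqxx mulr1n; congr (_ * phi _).
  by apply/ffunP => i; rewrite ffunE; case: eqP => // ->.
by move=> k hk; rewrite mxE eq_sym (negPf hk) mulr0n mul0r.
Qed.

Lemma opj_comm j l A B phi x : j != l ->
  opj j A (opj l B phi) x = opj l B (opj j A phi) x.
Proof.
move=> hjl; rewrite /opj.
under eq_bigr do rewrite big_distrr.
under [RHS]eq_bigr do rewrite big_distrr.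
rewrite exchange_big; apply: eq_bigr => m _; apply: eq_bigr => k _ /=.
rewrite upd_other; last by rewrite eq_sym.
rewrite upd_other // (upd_comm _ _ _ hjl).
by rewrite mulrCA.
Qed.

Variables (z : 'I_n) (hz : nat_of_ord z = 0%N).

Lemma op1E A phi x : op1 A phi x = opj z A phi x.
Proof.
rewrite /op1 (big_pred1 z) // => i /=.
by rewrite -val_eqE /= hz.
Qed.

Variables (psi : tensor F n d) (hpsi : sym_vec psi).

Lemma op1_perm A (s : 'S_n) x :
  op1 A psi [ffun i => x (s i)] = opj (s z) A psi x.
Proof.
rewrite op1E /opj ffunE; apply: eq_bigr => k _; congr (_ * _).
rewrite -(hpsi s (upd x (s z) k)); congr psi; apply/ffunP => i; rewrite /upd !ffunE.
by rewrite (inj_eq perm_inj).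
Qed.

Definition Cnd A := forall j x, opj j A psi x = opj z A psi x.

Lemma symP A : sym_vec (op1 A psi) <-> Cnd A.
Proof.
split=> [h j x|h s x].
  have := h (tperm z j) x; rewrite op1_perm tpermL => ->.
  by rewrite op1E.
by rewrite op1_perm h op1E.
Qed.

Lemma Cnd_mul A B : Cnd A -> Cnd B -> A *m B = B *m A -> Cnd (A *m B).
Proof.
move=> hA hB hAB j x; case: (eqVneq j z) => [->//|njz].
rewrite opjM (opj_ext _ _ _ (hB j)) opj_comm // (opj_ext _ _ _ (hA j)).
by rewrite -opjM -hAB.
Qed.

Lemma Cnd_addC A a : Cnd A -> Cnd (A + a%:M).
Proof. by move=> hA j x; rewrite !opjD !opj_scalar hA. Qed.

End Tens.
Unset Implicit Arguments.
Lemma Cnd_horner (F : fieldType) n d (z : 'I_n) (psi : tensor F n d.+1)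
  (B : 'M[F]_d.+1) q : Cnd z psi B -> Cnd z psi (horner_mx B q).
Proof.
move=> hB; elim/poly_ind: q => [|q a IH].
  rewrite rmorph0 => j x; rewrite /opj !big1 // => k _; by rewrite mxE mul0r.
rewrite rmorphD rmorphM /= horner_mx_X horner_mx_C.
apply: Cnd_addC; apply: Cnd_mul => //.
by rewrite (comm_mx_horner q (erefl (B *m B))).
Qed.

Lemma horner_conj (F : fieldType) d (P A : 'M[F]_d.+1) q : P \is a GRing.unit ->
  horner_mx (P * A * P^-1) q = P * horner_mx A q * P^-1.
Proof.
move=> hP; elim/poly_ind: q => [|q a IH].
  by rewrite !rmorph0 mulr0 mul0r.
rewrite !rmorphD !rmorphM /= !horner_mx_X !horner_mx_C IH.
rewrite mulrDr mulrDl; congr (_ + _).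
  by rewrite !mulrA mulrVK.
by rewrite -mulmxE scalar_mxC mulmxE mulrK.
Qed.
Lemma nilp_strict (F : fieldType) d (M : 'M[F]_d.+1) :
  (forall i j : 'I_d.+1, (j <= i)%N -> M i j = 0) -> M ^+ d.+1 = 0.
Proof.
move=> hM.
have aux t : forall i j : 'I_d.+1, (j < i + t)%N -> (M ^+ t) i j = 0.
  elim: t => [|t IH] i j hij.
    rewrite expr0 -idmxE mxE; case: eqP => // eij.
    by move: hij; rewrite eij addn0 ltnn.
  rewrite exprSr -mulmxE mxE big1 // => l _.
  case: (ltnP l (i + t)) => hl; first by rewrite IH // mul0r.
  rewrite hM ?mulr0 //.
  by move: hij hl; rewrite addnS ltnS; apply: leq_trans.
apply/matrixP => i j; rewrite aux ?mxE //.
by rewrite (leq_trans (ltn_ord j)) // leq_addl.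
Qed.

Section Jordan.
Variables (F : fieldType) (d p : nat) (e : 'I_d.+1 -> 'I_p) (c : 'I_d.+1 -> bool).
Hypothesis hJ : jordan_consistent e c.

Definition Jm (lam : 'I_p -> F) : 'M[F]_d.+1 := jordan_mx (fun i => lam (e i)) c.
Definition Ek (k : 'I_p) : 'M[F]_d.+1 := diag_mx (\row_i ((e i == k)%:R)).

Lemma EkE k i j : Ek k i j = (e i == k)%:R *+ (i == j).
Proof. by rewrite !mxE. Qed.

Lemma JE lam i j : Jm lam i j =
  (i == j)%:R * lam (e i) + ((nat_of_ord j == (nat_of_ord i).+1) && c i)%:R.
Proof. by rewrite !mxE. Qed.

Lemma Ek_comm lam k : Jm lam * Ek k = Ek k * Jm lam.
Proof.
rewrite -!mulmxE mul_mx_diag mul_diag_mx; apply/matrixP => i j; rewrite !mxE.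
case: (eqVneq i j) => [->|nij]; first by rewrite mulrC.
rewrite /= mul0r add0r.
case hc: ((nat_of_ord j == (nat_of_ord i).+1) && c i); last by rewrite mulr0 mul0r.
by case/andP: hc => /eqP hj hci; rewrite (hJ i j hj hci) mulr1 mul1r.
Qed.

Lemma Ek_idem k : Ek k * Ek k = Ek k.
Proof.
rewrite -mulmxE mul_diag_mx; apply/matrixP => i j; rewrite !mxE.
by case: (e i == k); case: (i == j); rewrite /= ?mulr0n ?mulr1n ?mul1r ?mul0r ?mulr0.
Qed.

Lemma sum_Ek : \sum_k Ek k = 1.
Proof.
apply/matrixP => i j; rewrite summxE -idmxE [RHS]mxE.
under eq_bigr do rewrite EkE.
rewrite (bigD1 (e i)) //= eqxx big1 ?addr0 //.
by move=> k hk; rewrite eq_sym (negPf hk) mul0rn.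
Qed.

Variables (lam : 'I_p -> F) (hlam : injective lam).

Definition apol (k : 'I_p) : {poly F} := ('X - (lam k)%:P) ^+ d.+1.

Lemma apol_E k : horner_mx (Jm lam) (apol k) * Ek k = 0.
Proof.
rewrite /apol rmorphXn rmorphB /= horner_mx_X horner_mx_C.
have hc : GRing.comm (Jm lam - (lam k)%:M) (Ek k).
  rewrite /GRing.comm mulrBl mulrBr Ek_comm; congr (_ - _).
  by rewrite -!mulmxE scalar_mxC.
have idem t : Ek k ^+ t.+1 = Ek k.
  by elim: t => [|t IH]; rewrite ?expr1 // exprS IH Ek_idem.
rewrite -(idem d) -exprMn_comm //.
apply: nilp_strict => i j hji.
rewrite -mulmxE mul_mx_diag !mxE.
case: (eqVneq i j) => [eij|nij].
  subst j; rewrite (ltn_eqF (ltnSn i)) andFb /= mul1r mulr1n addr0.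
  by case: eqP => [->|_]; rewrite ?subrr ?mulr0 ?mul0r.
rewrite /= mulr0n mul0r add0r subr0.
have -> : (nat_of_ord j == (nat_of_ord i).+1) = false.
  by apply/negbTE; rewrite neq_ltn ltnS hji.
by rewrite mul0r.
Qed.

Definition bpol (k : 'I_p) : {poly F} := \prod_(l | l != k) apol l.

Lemma bpol_E k l : l != k -> horner_mx (Jm lam) (bpol k) * Ek l = 0.
Proof.
move=> hl; rewrite /bpol (bigD1 l) //= mulrC rmorphM /= -mulrA apol_E.
by rewrite mulr0.
Qed.

Lemma cop k : coprimep (apol k) (bpol k).
Proof.
rewrite /bpol; apply: (big_ind (coprimep (apol k))) => [|x y hx hy|l hl].
- exact: coprimep1.
- by rewrite coprimepMr hx hy.
rewrite /apol; apply/coprimep_expl/coprimep_expr/coprimep_XsubC2.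
by rewrite subr_eq0; apply/eqP => /hlam h; move: hl; rewrite h eqxx.
Qed.

Lemma ek_exists k : exists q, horner_mx (Jm lam) q = Ek k.
Proof.
case/Bezout_coprimepP: (cop k) => [[u v] /= huv].
have /size_poly1P [c0 c0n0 hw] : size (u * apol k + v * bpol k) == 1%N.
  by rewrite (eqp_size huv) size_poly1.
exists (c0^-1 *: (v * bpol k)).
have hvb : v * bpol k = c0%:P - u * apol k by rewrite -hw addrC addKr.
rewrite linearZ /=.
have -> : horner_mx (Jm lam) (v * bpol k) = c0 *: Ek k.
  rewrite -[LHS]mulr1 -sum_Ek mulr_sumr (bigD1 k) //= big1 ?addr0.
    rewrite hvb rmorphB rmorphM /= horner_mx_C mulrBl -mulrA apol_E mulr0 subr0.
    by rewrite -mulmxE mul_scalar_mx.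
  by move=> l hl; rewrite rmorphM /= -mulrA bpol_E ?mulr0.
by rewrite scalerA mulVf // scale1r.
Qed.

End Jordan.
Arguments Jm {F d p}.
Arguments Ek {F d p}.
Arguments ek_exists {F d p e c} hJ {lam} hlam k.

Lemma jordan_poly (F : fieldType) (d p : nat) (e : 'I_d.+1 -> 'I_p)
  (c : 'I_d.+1 -> bool) (hJ : jordan_consistent e c)
  (lam lamt : 'I_p -> F) (hlam : injective lam) :
  exists q, horner_mx (Jm e c lam) q = Jm e c lamt.
Proof.
pose Pr (X : 'M[F]_d.+1) := exists q, horner_mx (Jm e c lam) q = X.
have -> : Jm e c lamt = Jm e c lam + \sum_k (lamt k - lam k) *: Ek e k.
  apply/matrixP => i j; rewrite !mxE summxE.
  under eq_bigr do rewrite mxE EkE.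
  rewrite (bigD1 (e i)) //= big1 ?addr0; last first.
    by move=> k hk; rewrite eq_sym in hk; rewrite (negPf hk) mul0rn mulr0.
  rewrite eqxx; case: (i == j); rewrite /= ?mulr1n ?mulr0n ?mul1r ?mul0r ?mulr1 ?mulr0 ?add0r ?addr0 //.
  by rewrite addrAC addrCA subrr addr0 addrC.
have hadd X Y : Pr X -> Pr Y -> Pr (X + Y).
  by move=> [q1 h1] [q2 h2]; exists (q1 + q2); rewrite rmorphD /= h1 h2.
apply: (hadd); first by exists 'X; rewrite horner_mx_X.
apply: big_ind => [|X Y|k _]; [by exists 0; rewrite rmorph0 | exact: hadd |].
have [q hq] := ek_exists hJ hlam k.
by exists ((lamt k - lam k) *: q); rewrite linearZ /= hq.
Qed.

Theorem theorem3 (C : numClosedFieldType) (n d p : nat) (hn : (2 <= n)%N)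
  (P : 'M[C]_d) (hP : P \in unitmx)
  (e : 'I_d -> 'I_p) (c : 'I_d -> bool) (hJ : jordan_consistent e c)
  (he : forall k : 'I_p, exists i : 'I_d, e i = k)
  (lam lamt : 'I_p -> C) (hlam : injective lam) (hlamt : injective lamt)
  (psi : tensor C n d) (hpsi : sym_vec psi) :
  sym_vec (op1 (P *m jordan_mx (fun i => lam (e i)) c *m invmx P) psi)
  <-> sym_vec (op1 (P *m jordan_mx (fun i => lamt (e i)) c *m invmx P) psi).
Proof.
case: d P hP e c hJ he psi hpsi => [|d] P hP e c hJ he psi hpsi.
  have hn0 : (0 < n)%N by apply: leq_trans hn.
  by split=> _ s x; case: (x (Ordinal hn0)).
have hn0 : (0 < n)%N by apply: leq_trans hn.
pose z : 'I_n := Ordinal hn0.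
have hz : nat_of_ord z = 0%N by [].
have hPu : P \is a GRing.unit by [].
have key : forall l1 l2 : 'I_p -> C, injective l1 ->
    sym_vec (op1 (P * Jm e c l1 * P^-1) psi) ->
    sym_vec (op1 (P * Jm e c l2 * P^-1) psi).
  move=> l1 l2 hl1 h.
  have [q hq] := @jordan_poly _ _ _ e c hJ l1 l2 hl1.
  rewrite -hq -horner_conj //.
  apply/(symP hz hpsi); apply: Cnd_horner; exact/(symP hz hpsi).
by split; apply: key.
Qed.
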